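(* Let $G$ be a finite group with $d(G) \geq 3$, and assume that $G/\mathrm{Cyc}(G) \cong p^r{:}\langle g\rangle$ where $p$ is prime and $g \in \mathrm{GL}_r(p)$ is a scalar matrix. Then $G$ is $k$-flexible for all $2 \leq k < d(G)$.
   Context: For a finite group $H$, $d(H)$ denotes the minimal size of a generating set of $H$. For an integer $1 \leq k \leq d(G)$, $G$ is called $k$-flexible if for any $x_1,\dots,x_k \in G$ with $d(\langle x_1,\dots,x_k\rangle)=k$ there exist $x_{k+1},\dots,x_{d(G)} \in G$ such that $\langle x_1,\dots,x_{d(G)}\rangle = G$. The cycliciser of $G$ is $\mathrm{Cyc}(G) = \{c \in G \mid \langle c,g\rangle \text{ is cyclic for all } g \in G\}$; it is a normal subgroup of $G$. The notation $p^r{:}\langle g\rangle$ denotes the semidirect product of the elementary abelian group $\mathbb{F}_p^r$ by the cyclic subgroup $\langle g\rangle \leq \mathrm{GL}_r(p)$ acting naturally; a scalar means $g=\lambda I_r$ with $\lambda\in\mathbb{F}_p^\times$. *)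

(* Defs.v *)
From HB Require Import structures.
From mathcomp Require Import all_boot all_order all_algebra all_fingroup all_solvable all_character.
Set Implicit Arguments. Unset Strict Implicit. Unset Printing Implicit Defensive.
Import GRing.Theory.
Local Open Scope group_scope.

Section Defs.
Variable gT : finGroupType.

Definition gen_pred (H : {set gT}) : pred nat :=
  fun n => [exists X : {set gT}, (#|X| == n) && (<<X>> == H)].

Lemma gen_pred_ex (H : {group gT}) : exists n, gen_pred H n.
Proof. by exists #|H|; apply/existsP; exists (H : {set gT}); rewrite eqxx genGid eqxx. Qed.

Definition d (H : {group gT}) : nat := ex_minn (gen_pred_ex H).

(* k-flexibility (k is restricted to 1 <= k <= d(G) where it is used). *)
Definition flexible (G : {group gT}) (k : nat) : Prop :=
  forall x : 'I_k -> gT, (forall i, x i \in G) ->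
    d <<[set x i | i : 'I_k]>>%G = k ->
    exists y : 'I_(d G - k) -> gT, (forall j, y j \in G) /\
      <<[set x i | i : 'I_k] :|: [set y j | j : 'I_(d G - k)]>> = G.

Definition Cyc (G : {set gT}) : {set gT} :=
  [set c in G | [forall h in G, cyclic <<[set c; h]>>]].
End Defs.

(* p^r : <g> for g in GL_r(p), r = r'.+1, with <g> acting naturally on F_p^r. *)
Definition cyc_GLrepr (p r' : nat) (g : {'GL_r'.+1['F_p]}) :=
  subg_repr (GLrepr 'F_p r') (subsetT <[g]>).
Definition psd (p r' : nat) (g : {'GL_r'.+1['F_p]}) : finGroupType :=
  sdprod_by ('MR (cyc_GLrepr g))%gact.

(* Main.v *)
Require Import Defs.
From HB Require Import structures.
From mathcomp Require Import all_boot all_order all_algebra all_fingroup all_solvable all_character.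
Set Implicit Arguments. Unset Strict Implicit. Unset Printing Implicit Defensive.
From mathcomp Require Import zify.
Local Open Scope group_scope.
Lemma ar1 a b c k s : a + b <= c -> k <= a -> c <= k + s -> b <= s.
Proof. lia. Qed.
Lemma ar2 a b c k s (x : bool) : a + b <= c -> k <= a -> c + 1 <= k + s -> x + b <= s.
Proof. case: x => /=; lia. Qed.
Lemma ar3 a b c k s : a + b <= c -> k <= a + 1 -> c + 1 <= k + s -> b <= s.
Proof. lia. Qed.
Lemma gen_eqP (gT : finGroupType) (A B : {set gT}) :
  A \subset <<B>> -> B \subset <<A>> -> <<A>> = <<B>>.
Proof. by move=> sAB sBA; apply/eqP; rewrite eqEsubset !gen_subG sAB sBA. Qed.

Section Elem.
Variables (rT : finGroupType) (p : nat) (V : {group rT}).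
Hypotheses (pr_p : prime p) (abV : p.-abelem V).
Local Open Scope nat_scope.

Lemma ord_le_p x : x \in V -> #[x] <= p.
Proof.
move=> xV; case: (eqVneq x 1%g) => [->|nx1]; first by rewrite order1 prime_gt0.
by rewrite (abelem_order_p abV xV nx1).
Qed.

Lemma join_cyc_card (W : {group rT}) x : W \subset V -> x \in V ->
  #|(W <*> <[x]>)%G| <= #|W| * p.
Proof.
move=> sWV xV; have cWx : commute W <[x]>.
  apply: centC; apply: centSS sWV _ (abelem_abelian abV); by rewrite cycle_subG.
rewrite /= comm_joingE //.
have := mul_cardG W <[x]>; move=> e.
apply: leq_trans (_ : #|W| * #|<[x]>| <= _); last by rewrite leq_mul2l ord_le_p ?orbT.
by rewrite e leq_pmulr // cardG_gt0.
Qed.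

Lemma E1s (W : {group rT}) (s : seq rT) : W \subset V -> all (mem V) s ->
  #|<<W :|: [set:: s]>>| <= #|W| * p ^ size s.
Proof.
elim: s W => [|x s IH] W sWV /=.
  by rewrite set_nil setU0 genGid expn0 muln1.
case/andP=> xV sV.
have sW'V : (W <*> <[x]>)%G \subset V by rewrite /= join_subG sWV cycle_subG.
have -> : <<W :|: [set:: x :: s]>> = <<(W <*> <[x]>)%G :|: [set:: s]>>.
  rewrite set_cons; apply: gen_eqP.
    have sWJ : W \subset W <*> <[x]> by exact: joing_subl.
    have xJ : x \in W <*> <[x]> by rewrite mem_gen // inE cycle_id orbT.
    rewrite !subUset sub1set; apply/and3P; split.
    - apply: subset_trans sWJ _; apply: sub_gen; exact: subsetUl.
    - apply: mem_gen; rewrite inE; apply/orP; left; exact: xJ.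
    - apply: sub_gen; exact: subsetUr.
  rewrite subUset; apply/andP; split.
    rewrite /= join_subG; apply/andP; split.
      apply: sub_gen; exact: subsetUl.
    rewrite cycle_subG mem_gen // !inE eqxx orbT //.
  by apply/subsetP=> y ys; apply: mem_gen; rewrite in_setU in_setU1 ys !orbT.
apply: leq_trans (IH _ sW'V sV) _.
by rewrite expnS mulnA leq_mul2r join_cyc_card // orbT.
Qed.
End Elem.

Lemma gen1U (gT : finGroupType) (A : {set gT}) : <<1 :|: A>> = <<A>>.
Proof.
apply: gen_eqP; first by rewrite subUset sub1G subset_gen.
by apply: sub_gen; exact: subsetUr.
Qed.

Lemma genXU (gT : finGroupType) (A B : {set gT}) : <<<<A>> :|: B>> = <<A :|: B>>.
Proof.
apply: gen_eqP; rewrite subUset.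
  by rewrite genS ?subsetUl // sub_gen ?subsetUr.
apply/andP; split; last by apply: sub_gen; exact: subsetUr.
by apply: sub_gen; apply: subset_trans (subset_gen A) (subsetUl _ _).
Qed.
Section Elem2.
Variables (rT : finGroupType) (p : nat) (V : {group rT}).
Hypotheses (pr_p : prime p) (abV : p.-abelem V).
Local Open Scope nat_scope.

Lemma cardV_log (X : {group rT}) : X \subset V -> #|X| = p ^ logn p #|X|.
Proof. by move=> sXV; apply: card_pgroup; apply: pgroupS sXV (abelem_pgroup abV). Qed.

Lemma E1 (W : {group rT}) (S : {set rT}) : W \subset V -> S \subset V ->
  logn p #|<<W :|: S>>| <= logn p #|W| + #|S|.
Proof.
move=> sWV sSV.
have := E1s pr_p abV (s := enum S) sWV.
rewrite set_enum -cardE.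
have -> : all (mem V) (enum S).
  by apply/allP=> y; rewrite mem_enum => /(subsetP sSV).
move=> /(_ isT) H.
have sGV : <<W :|: S>> \subset V by rewrite gen_subG subUset sWV.
rewrite (cardV_log sGV) [#|W|](cardV_log sWV) -expnD in H.
by rewrite leq_exp2l ?prime_gt1 in H.
Qed.

Lemma E2 (W U : {group rT}) : W \subset U -> U \subset V ->
  exists S : {set rT}, [/\ S \subset U, logn p #|W| + #|S| <= logn p #|U| &
     <<W :|: S>> = U].
Proof.
move=> sWU sUV; have [n] := ubnP (#|U| - #|W|); elim: n W sWU => // n IH W sWU.
case: (eqVneq (W : {set rT}) U) => [eWU | nWU] lt.
  exists set0; rewrite sub0set cards0 addn0 setU0 genGid eWU; split=> //.
have : ~~ (U \subset W) by apply: contra nWU => sUW; rewrite eqEsubset sWU sUW.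
case/subsetPn=> x xU xW.
have xV : x \in V := subsetP sUV x xU.
have sWV : W \subset V := subset_trans sWU sUV.
have nx1 : x != 1%g by apply: contraNneq xW => ->; exact: group1.
have cWx : commute W <[x]>.
  apply: centC; apply: centSS sWV _ (abelem_abelian abV); by rewrite cycle_subG.
have cardJ : #|W <*> <[x]>| = #|W| * p.
  rewrite /= comm_joingE // TI_cardMg -?orderE ?(abelem_order_p abV xV nx1) //.
  rewrite setIC prime_TIg // ?cycle_subG // -orderE (abelem_order_p abV xV nx1) //.
have sJU : (W <*> <[x]>)%G \subset U by rewrite /= join_subG sWU cycle_subG.
have [|S [sSU leS eS]] := IH _ sJU.
  rewrite /= cardJ -ltnS (leq_trans _ lt) // ltnS; apply: ltn_sub2l.
    by apply: proper_card; rewrite properEneq nWU sWU.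
  by rewrite ltn_Pmulr ?prime_gt1 ?cardG_gt0.
exists (x |: S); split.
- by rewrite subUset sub1set xU sSU.
- apply: leq_trans leS; rewrite cardsU1 cardJ.
  rewrite (cardV_log sWV) -expnSr pfactorK //.
  rewrite (pfactorK _ pr_p) addSn -addnS leq_add2l.
  by case: (x \notin S); rewrite ?add1n ?add0n // leqnSn.
- rewrite -eS; apply: gen_eqP.
    rewrite !subUset sub1set; apply/and3P; split.
    + apply: sub_gen; apply: subset_trans (joing_subl _ _) (subsetUl _ _).
    + by apply: mem_gen; rewrite inE mem_gen // inE cycle_id orbT.
    + apply: sub_gen; exact: subsetUr.
  rewrite subUset; apply/andP; split.
    rewrite /= join_subG; apply/andP; split.
      apply: sub_gen; exact: subsetUl.
    by rewrite cycle_subG mem_gen // !inE eqxx orbT.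
  by apply/subsetP=> y ys; apply: mem_gen; rewrite in_setU in_setU1 ys !orbT.
Qed.
End Elem2.
Section Affine.
Variables (rT : finGroupType) (p : nat) (P V C : {group rT}).
Hypotheses (pr_p : prime p) (abV : p.-abelem V) (sdP : V ><| C = P) (cycC : cyclic C).
Hypothesis nUC : forall U : {group rT}, U \subset V -> C \subset 'N(U).
Hypothesis fpf : forall c v, c \in C -> c != 1 -> v \in V -> v ^ c = v -> v = 1.

Lemma nVP : V <| P. Proof. by case: (sdprod_context sdP). Qed.
Lemma sCP : C \subset P. Proof. by case: (sdprod_context sdP). Qed.
Lemma mulVC : V * C = P. Proof. by case: (sdprod_context sdP). Qed.
Lemma nVC : C \subset 'N(V). Proof. by case: (sdprod_context sdP). Qed.
Lemma tiVC : V :&: C = 1. Proof. by case: (sdprod_context sdP). Qed.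
Lemma sVP : V \subset P. Proof. exact: normal_sub nVP. Qed.

Lemma abel_conj a b : a \in V -> b \in V -> a ^ b = a.
Proof.
move=> aV bV; have /centsP cV := abelem_abelian abV.
by apply/conjg_fixP/commgP; exact: cV.
Qed.

Lemma conj_lemma c v : c \in C -> c != 1 -> v \in V ->
  exists2 u, u \in V & v * c = c ^ u.
Proof.
move=> cC nc1 vV.
set d := c^-1.
have dC : d \in C by rewrite groupV.
have nd1 : d != 1 by rewrite invg_eq1.
have dN : d \in 'N(V) := subsetP nVC d dC.
pose psi u := u^-1 * u ^ d.
have psiV : {in V, forall u, psi u \in V}.
  by move=> u uV; rewrite groupM ?groupV // memJ_norm.
have inj : {in V &, injective psi}.
  move=> u1 u2 u1V u2V e.
  have w1 : (u2 * u1^-1) ^ d = u2 * u1^-1.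
    rewrite conjMg conjVg.
    have -> : u2 ^ d = u2 * (u1^-1 * u1 ^ d) by rewrite /psi in e; rewrite e mulKVg.
    by rewrite (mulgA u2) mulgK.
  have h := fpf dC nd1 (groupM u2V (groupVr u1V)) w1.
  by rewrite -[u2](mulgKV u1) h mul1g.
have eqV : [set psi u | u in V] = V.
  apply/eqP; rewrite eqEcard card_in_imset // leqnn andbT.
  by apply/subsetP=> _ /imsetP[u uV ->]; exact: psiV.
have : v \in [set psi u | u in V] by rewrite eqV.
case/imsetP=> u uV ev; exists u => //.
by rewrite ev /psi /d !conjgE invgK !mulgA mulgKV.
Qed.

Lemma decomp x : x \in P -> x \in V \/
  exists c u, [/\ c \in C, c != 1, u \in V & x = c ^ u].
Proof.
rewrite -mulVC => /mulsgP[v c vV cC ->].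
case: (eqVneq c 1) => [->|nc1]; [left; by rewrite mulg1 | right].
have [u uV e] := conj_lemma cC nc1 vV.
by exists c, u.
Qed.

Lemma Q1 (X : {set rT}) : X \subset P -> <<X>> = P ->
  logn p #|V| + (C :!=: 1) <= #|X|.
Proof.
move=> sXP gX.
case: (eqVneq (C : {set rT}) 1) => [C1 | nC1] /=.
  rewrite addn0.
  have eVP : (V : {set rT}) = P by rewrite -mulVC C1 mulg1.
  have sXV : X \subset V by rewrite eVP.
  have := E1 pr_p abV (W := 1%G) (S := X) (sub1G _) sXV.
  by rewrite /= gen1U gX -eVP cards1 logn1 add0n.
have [x0 x0X x0V] : exists2 x0, x0 \in X & x0 \notin V.
  case: (boolP (X \subset V)) => sXV; last first.
    by case/subsetPn: sXV => x0 ? ?; exists x0.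
  have sPV : P \subset V by rewrite -gX gen_subG.
  have : V :&: C = C by apply/setIidPr; exact: subset_trans sCP sPV.
  by rewrite tiVC => e; rewrite -e eqxx in nC1.
case: (decomp (subsetP sXP _ x0X)) => [x0V'|[c0 [u0 [c0C nc01 u0V e0]]]].
  by rewrite x0V' in x0V.
set X' := X :^ u0^-1.
have cX' : #|X'| = #|X| := cardJg _ _.
have u0P : u0 \in P := subsetP sVP _ u0V.
have gX' : <<X'>> = P by rewrite genJ gX conjGid // groupV.
have c0X' : c0 \in X' by rewrite -(conjgK u0 c0) -e0 memJ_conjg.
have sX'P : X' \subset P by rewrite -gX'; exact: subset_gen.
pose w x := if x \in V then x else odflt 1 [pick u in V | x ^ u^-1 \in C].
have wV : forall x, w x \in V.
  move=> x; rewrite /w; case: ifP => // _; case: pickP => [u /andP[] | ] //= _.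
set B := [set w x | x in X' :\ c0].
have sBV : B \subset V by apply/subsetP=> _ /imsetP[x _ ->].
have cB : #|B| < #|X|.
  apply: leq_ltn_trans (leq_imset_card _ _) _.
  by rewrite -cX' (cardsD1 c0 X') c0X'.
have sUV : <<B>> \subset V by rewrite gen_subG.
have nUC' : C \subset 'N(<<B>>) := nUC (U := <<B>>%G) sUV.
have sX'K : X' \subset <<B>> <*> C.
  apply/subsetP=> x xX'.
  case: (eqVneq x c0) => [->|nxc0]; first exact: subsetP (joing_subr _ _) _ c0C.
  have xB : w x \in <<B>> by rewrite mem_gen // imset_f // !inE nxc0 xX'.
  rewrite /w in xB; case: ifP xB => [xV xB | xV].
    exact: subsetP (joing_subl _ _) _ xB.
  case: (decomp (subsetP sX'P _ xX')) => [xV'|[c [u [cC nc1 uV ex]]]].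
    by rewrite xV' in xV.
  case: pickP => [u' /andP[u'V cu'] | none]; last first.
    by have := none u; rewrite uV ex conjgK cC.
  move=> /= u'B.
  rewrite -(conjgKV u' x) groupJ //.
    exact: subsetP (joing_subr _ _) _ cu'.
  exact: subsetP (joing_subl _ _) _ u'B.
have sVK : V \subset <<B>> * C.
  rewrite -norm_joinEr //; apply: subset_trans sVP _.
  by rewrite -gX' gen_subG.
have sVU : V \subset <<B>>.
  have : V \subset <<B>> * C :&: V by rewrite subsetI sVK subxx.
  by rewrite -group_modl // setIC tiVC mulg1.
have := E1 pr_p abV (W := 1%G) (S := B) (sub1G _) sBV.
rewrite /= gen1U cards1 logn1 add0n => le1.
have le2 := dvdn_leq_log p (cardG_gt0 _) (cardSg sVU).
by rewrite addn1 (leq_ltn_trans (leq_trans le2 le1) cB).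
Qed.

Lemma gens_log (W : {group rT}) : W \subset V ->
  exists T : {set rT}, [/\ T \subset W, #|T| <= logn p #|W| & <<T>> = W].
Proof.
move=> sWV; have [T [sTW lT eT]] := E2 pr_p abV (sub1G W) sWV.
exists T; split=> //; last by rewrite -gen1U.
by move: lT; rewrite cards1 logn1.
Qed.

Lemma comm_lemma c c' v : c \in C -> c != 1 -> c' \in C -> c' != 1 -> v \in V ->
  v \in <[ [~ c ^ v, c'] ]> /\ [~ c ^ v, c'] \in V.
Proof.
move=> cC nc1 c'C nc'1 vV.
set e := ((v^-1) ^ c * v)%g.
have svV : <[v]> \subset V by rewrite cycle_subG.
have nvC := nUC (U := <[v]>%G) svV.
have cN : c \in 'N(<[v]>) := subsetP nvC c cC.
have c'N : c' \in 'N(<[v]>) := subsetP nvC c' c'C.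
have eV : e \in <[v]> by rewrite groupM ?cycle_id // memJ_norm // groupV cycle_id.
have ce : c ^ v = c * e by rewrite /e !conjgE !mulgA mulgV mul1g.
have cc' : [~ c, c'] = 1.
  apply/eqP/commgP; have /centsP cC' := cyclic_abelian cycC; exact: cC'.
have z_eq : [~ c ^ v, c'] = [~ e, c'] by rewrite ce commMgJ cc' conj1g mul1g.
have zv : [~ e, c'] \in <[v]> by rewrite commgEl groupM ?groupV // memJ_norm.
rewrite z_eq; split; last exact: subsetP svV _ zv.
case: (eqVneq v 1) => [->|nv1]; first by rewrite group1.
have nz1 : [~ e, c'] != 1.
  apply/negP => /conjg_fixP ee.
  have e1 := fpf c'C nc'1 (subsetP svV _ eV) ee.
  have : (v^-1) ^ c = v^-1.
    by move: e1; rewrite /e => /(congr1 (mulg^~ v^-1)); rewrite /= mulgK mul1g.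
  by move/(fpf cC nc1 (groupVr vV))/eqP; rewrite invg_eq1 (negbTE nv1).
have oz : #[ [~ e, c'] ] = p := abelem_order_p abV (subsetP svV _ zv) nz1.
have ov : #[v] = p := abelem_order_p abV vV nv1.
have -> : <[ [~ e, c'] ]> = <[v]>.
  by apply/eqP; rewrite eqEcard cycle_subG zv /= -!orderE oz ov leqnn.
exact: cycle_id.
Qed.

Lemma cyc_top (H : {group rT}) : H \subset P ->
  exists2 h, h \in H & <<(H :&: V) :|: [set h]>> = H.
Proof.
move=> sHP.
have cPV : cyclic (P / V) by rewrite -(isog_cyclic (sdprod_isog sdP)).
have cHV : cyclic (H / V) := cyclicS (quotientS V sHP) cPV.
case/cyclicP: cHV => xb eH.
have : xb \in H / V by rewrite eH cycle_id.
case/morphimP => h hN hH exb.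
exists h => //.
apply/eqP; rewrite eqEsubset gen_subG subUset subsetIl sub1set hH /=.
apply/subsetP=> y yH.
have yN : y \in 'N(V) := subsetP (subset_trans sHP (normal_norm nVP)) y yH.
have : coset V y \in <[xb]> by rewrite -eH mem_quotient.
case/cycleP => i ei.
set z := y * (h ^+ i)^-1.
have zV : z \in V.
  apply: coset_idr; first by rewrite groupM ?groupV ?groupX.
  by rewrite /z morphM ?groupV ?groupX // morphV ?groupX // morphX // -exb -ei mulgV.
have zH : z \in H by rewrite groupM ?groupV ?groupX.
have -> : y = z * h ^+ i by rewrite mulgKV.
rewrite groupM ?groupX // mem_gen // !inE ?zH ?zV ?eqxx ?orbT //.
Qed.

Lemma QT (Xb : {set rT}) (k s : nat) : Xb \subset P -> 1 < k -> 0 < s ->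
  (forall T : {set rT}, T \subset P -> T != set0 -> <<T>> = <<Xb>> -> k <= #|T|) ->
  logn p #|V| + (C :!=: 1) <= k + s ->
  exists Y : {set rT}, [/\ Y \subset P, #|Y| <= s & <<Xb :|: Y>> = P].
Proof.
move=> sXP k2 s0 minT bound.
have sHP : <<Xb>> \subset P by rewrite gen_subG.
have [c eC] := cyclicP cycC.
have cC : c \in C by rewrite eC cycle_id.
have cP : c \in P := subsetP sCP c cC.
have sPgen : forall Y : {set rT}, Y \subset P -> V \subset <<Xb :|: Y>> -> c \in <<Xb :|: Y>> ->
    <<Xb :|: Y>> = P.
  move=> Y sYP sV cK; apply/eqP; rewrite eqEsubset gen_subG subUset sXP sYP /=.
  by rewrite -mulVC eC mul_subG // cycle_subG.
have sHK : forall Y : {set rT}, <<Xb>> \subset <<Xb :|: Y>> by move=> Y; rewrite genS ?subsetUl.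
have lowb : forall (W : {group rT}) h, W \subset V -> <<W :|: [set h]>> = <<Xb>> ->
    k <= logn p #|W| + 1.
  move=> W h sWV eW; have [T [sTW cT eT]] := gens_log sWV.
  have hH : h \in <<Xb>> by rewrite -eW mem_gen // !inE eqxx orbT.
  have ne : h |: T != set0 by apply/set0Pn; exists h; rewrite setU11.
  have sT : h |: T \subset P.
    by rewrite subUset sub1set (subsetP sHP _ hH) (subset_trans sTW (subset_trans sWV sVP)).
  have eg : <<h |: T>> = <<Xb>>.
    rewrite -eW; apply: gen_eqP.
      rewrite subUset sub1set mem_gen ?inE ?eqxx ?orbT //=.
      by apply: subset_trans sTW _; apply: sub_gen; exact: subsetUl.
    rewrite subUset sub1set mem_gen ?inE ?eqxx //= andbT -eT genS //.
    exact: subsetUr.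
  have le := minT _ sT ne eg.
  apply: leq_trans le _; rewrite cardsU1 addnC leq_add //; by case: (h \in T).
case: (boolP (<<Xb>> \subset V)) => sHV.
  have kH : k <= logn p #|<<Xb>>|.
    have [T [sTH cT eT]] := gens_log sHV.
    case: (eqVneq T set0) => [T0 | nT0].
      have := minT [set 1]; rewrite sub1set group1 cards1.
      have ne : [set 1] != set0 :> {set rT} by apply/set0Pn; exists 1; rewrite set11.
      move=> /(_ isT ne); rewrite -set1gE genGid -eT T0 gen0 => /(_ erefl) k1.
      by move: k2; rewrite ltnNge k1.
    apply: leq_trans (minT T _ nT0 _) cT; last by rewrite eT.
    exact: subset_trans sTH sHP.
  have [S [sSV lS eS]] := E2 pr_p abV sHV (subxx V).
  have eHS : <<Xb :|: S>> = V by rewrite -genXU eS.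
  case: (eqVneq (C : {set rT}) 1) => [C1 | nC1].
    have eVP : (V : {set rT}) = P by rewrite -mulVC C1 mulg1.
    exists S; split.
    - by rewrite -eVP.
    - by rewrite C1 eqxx /= addn0 in bound; exact: ar1 lS kH bound.
    - by rewrite eHS eVP.
  exists (c |: S); split.
  - by rewrite subUset sub1set cP (subset_trans sSV sVP).
  - rewrite cardsU1; rewrite nC1 /= in bound; exact: ar2 lS kH bound.
  - apply: sPgen.
    + by rewrite subUset sub1set cP (subset_trans sSV sVP).
    + by rewrite -eHS genS // setUS // subsetUr.
    + by rewrite mem_gen // !inE eqxx orbT.
have nC1 : (C : {set rT}) != 1.
  apply: contraNneq sHV => C1.
  have eVP : (V : {set rT}) = P by rewrite -mulVC C1 mulg1.
  by rewrite eVP.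
rewrite nC1 /= in bound.
have [h hH eh] := cyc_top sHP.
have kW := lowb (<<Xb>> :&: V)%G h (subsetIr _ _) eh.
have [S [sSV lS eS]] := E2 pr_p abV (subsetIr <<Xb>> V) (subxx V).
case: (eqVneq S set0) => [S0 | nS0].
  exists [set c]; split; rewrite ?sub1set ?cards1 //.
  apply: sPgen; rewrite ?sub1set //.
    rewrite -eS gen_subG subUset S0 sub0set andbT.
    exact: subset_trans (subsetIl _ _) (sHK _).
  by rewrite mem_gen // !inE eqxx orbT.
have hV : h \notin V.
  apply: contra sHV => hV; rewrite -eh gen_subG subUset subsetIr sub1set hV.
  done.
case: (decomp (subsetP sHP _ hH)) => [hV'|[c' [u [c'C nc'1 uV eh']]]].
  by rewrite hV' in hV.
have nc1 : c != 1 by apply: contraNneq nC1 => c1; rewrite eC c1 cycle1.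
set Y := [set c ^ (v * u) | v in S].
have sVK : V \subset <<Xb :|: Y>>.
  rewrite -eS gen_subG subUset (subset_trans (subsetIl _ _) (sHK _)) /=.
  apply/subsetP=> v vS.
  have vV := subsetP sSV v vS.
  have [vz zV] := comm_lemma cC nc1 c'C nc'1 vV.
  suff zK : [~ c ^ v, c'] \in <<Xb :|: Y>>.
    by apply: (subsetP _ _ vz); rewrite cycle_subG.
  have -> : [~ c ^ v, c'] = [~ c ^ (v * u), c' ^ u].
    by rewrite conjgM -conjRg (abel_conj zV uV).
  rewrite groupR //; first by rewrite mem_gen // inE; apply/orP; right; apply/imsetP; exists v.
  by rewrite -eh'; exact: subsetP (sHK Y) _ hH.
have cK : c \in <<Xb :|: Y>>.
  case/set0Pn: nS0 => v0 v0S.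
  have v0u : v0 * u \in <<Xb :|: Y>> := subsetP sVK _ (groupM (subsetP sSV _ v0S) uV).
  have : c ^ (v0 * u) \in <<Xb :|: Y>> by rewrite mem_gen // inE; apply/orP; right; apply/imsetP; exists v0.
  by move=> h1; rewrite -(conjgK (v0 * u) c) groupJ ?groupV.
have sYP : Y \subset P.
  apply/subsetP=> _ /imsetP[v vS ->].
  apply: groupJ => //; apply: groupM; apply: (subsetP sVP) => //.
  exact: (subsetP sSV).
exists Y; split => //.
  apply: leq_trans (leq_imset_card _ _) _; exact: ar3 lS kW bound.
exact: sPgen.
Qed.
End Affine.
Section CycSec.
Variables (gT : finGroupType) (G : {group gT}).

Lemma Cyc_sub : Cyc G \subset G.
Proof. by apply/subsetP=> c; rewrite inE => /andP[]. Qed.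

Lemma CycP c h : c \in Cyc G -> h \in G -> cyclic <<[set c; h]>>.
Proof. by rewrite inE => /andP[_ /forall_inP H] hG; exact: H. Qed.

Lemma absorb_s (a : gT) (s : seq gT) : a \in G -> all (mem (Cyc G)) s ->
  exists2 u, u \in G & <<a |: [set:: s]>> = <[u]>.
Proof.
move=> aG; elim: s => [|x s IH] /=.
  by move=> _; exists a => //; rewrite set_nil setU0.
case/andP=> xZ sZ; have [u uG eu] := IH sZ.
have xG : x \in G := subsetP Cyc_sub x xZ.
have /cyclicP [u' eu'] := CycP xZ uG.
have sG : <<[set x; u]>> \subset G by rewrite gen_subG subUset !sub1set xG uG.
exists u'; first by rewrite -cycle_subG -eu'.
rewrite -eu' set_cons; apply: gen_eqP.
  rewrite !subUset !sub1set; apply/and3P; split.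
  - apply: (subsetP (_ : <[u]> \subset _)); last by rewrite -eu mem_gen // setU11.
    by rewrite cycle_subG mem_gen // !inE eqxx orbT.
  - by rewrite mem_gen // !inE eqxx.
  - apply: subset_trans (_ : <[u]> \subset _).
      by rewrite -eu sub_gen // subsetUr.
    by rewrite cycle_subG mem_gen // !inE eqxx orbT.
rewrite subUset !sub1set; apply/andP; split.
  by rewrite mem_gen // !inE eqxx orbT.
have : u \in <<a |: [set:: s]>> by rewrite eu cycle_id.
apply: (subsetP (genS _)); rewrite subUset sub1set !inE eqxx /=.
by apply/subsetP=> y; rewrite !inE => ->; rewrite !orbT.
Qed.

Lemma absorb (a : gT) (S : {set gT}) : a \in G -> S \subset Cyc G ->
  exists2 u, u \in G & <<a |: S>> = <[u]>.
Proof.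
move=> aG sSZ; have := absorb_s (s := enum S) aG.
rewrite set_enum; apply.
by apply/allP=> y; rewrite mem_enum => /(subsetP sSZ).
Qed.

Lemma Cyc_group_set : group_set (Cyc G).
Proof.
apply/group_setP; split.
  rewrite inE group1; apply/forall_inP=> h hG.
  by rewrite -set1gE gen1U cycle_cyclic.
move=> c1 c2 c1Z c2Z; rewrite inE groupM ?(subsetP Cyc_sub) //=.
apply/forall_inP=> h hG.
have sZ : [set c1; c2] \subset Cyc G by rewrite subUset !sub1set c1Z c2Z.
have [u uG eu] := absorb hG sZ.
have : <<[set c1 * c2; h]>> \subset <<h |: [set c1; c2]>>.
  by rewrite gen_subG subUset !sub1set groupM ?mem_gen ?inE ?eqxx ?orbT.
by rewrite eu => /cyclicS; apply; exact: cycle_cyclic.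
Qed.

Canonical CycG := Group Cyc_group_set.

Lemma Cyc_norm : G \subset 'N(Cyc G).
Proof.
apply/normsP=> x xG; apply/eqP.
have sub : forall y, y \in G -> Cyc G :^ y \subset Cyc G.
  move=> y yG; apply/subsetP=> _ /imsetP[c cZ ->].
  have cG := subsetP Cyc_sub c cZ.
  rewrite inE groupJ //=; apply/forall_inP=> h hG.
  have -> : [set c ^ y; h] = [set c; h ^ y^-1] :^ y.
    by rewrite conjUg !conjg_set1 conjgKV.
  by rewrite genJ cyclicJ CycP // groupJ ?groupV.
by rewrite eqEcard sub // cardJg leqnn.
Qed.

End CycSec.

Lemma d_gen (gT : finGroupType) (H : {group gT}) :
  exists2 X : {set gT}, #|X| = d H & <<X>> = H.
Proof.
rewrite /d; case: ex_minnP => n /existsP[X /andP[/eqP cX /eqP eX]] _.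
by exists X.
Qed.

Lemma d_min (gT : finGroupType) (H : {group gT}) (X : {set gT}) :
  <<X>> = H -> d H <= #|X|.
Proof.
move=> eX; rewrite /d; case: ex_minnP => n _; apply.
by apply/existsP; exists X; rewrite eqxx eX eqxx.
Qed.

Lemma fun_of_set (gT : finGroupType) (A : {set gT}) n : #|A| <= n ->
  exists y : 'I_n -> gT, A \subset [set y j | j : 'I_n] /\
    [set y j | j : 'I_n] \subset 1 |: A.
Proof.
move=> cA; exists (fun j => nth 1 (enum A) j); split.
  apply/subsetP=> a aA.
  have ia : index a (enum A) < n.
    by apply: leq_trans cA; rewrite cardE index_mem mem_enum.
  by apply/imsetP; exists (Ordinal ia) => //=; rewrite nth_index ?mem_enum.
apply/subsetP=> _ /imsetP[j _ ->].
case: (ltnP j (size (enum A))) => lj.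
  by rewrite in_setU1 -mem_enum (mem_nth _ lj) orbT.
by rewrite nth_default // setU11.
Qed.

Section MainG.
Variables (gT rT : finGroupType) (G : {group gT}) (p : nat) (P V C : {group rT}).
Variable phi : {morphism G >-> rT}.
Hypotheses (pr_p : prime p) (abV : p.-abelem V) (sdP : V ><| C = P) (cycC : cyclic C).
Hypothesis nUC : forall U : {group rT}, U \subset V -> C \subset 'N(U).
Hypothesis fpf : forall c v, c \in C -> c != 1 -> v \in V -> v ^ c = v -> v = 1.
Hypotheses (imG : phi @* G = P) (kerG : 'ker phi = Cyc G).

Lemma lift_set (A : {set gT}) (Y : {set rT}) : A \subset G -> Y \subset phi @* A ->
  exists Y' : {set gT}, [/\ Y' \subset A, #|Y'| <= #|Y| & phi @* Y' = Y].
Proof.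
move=> sAG sYA.
pose lift y := odflt 1 [pick z in A | phi z == y].
have liftP : forall y, y \in Y -> lift y \in A /\ phi (lift y) = y.
  move=> y yY; have := subsetP sYA y yY; case/morphimP=> z zG zA ez.
  rewrite /lift; case: pickP => [z' /andP[z'A /eqP ez'] | none] //=.
  by have := none z; rewrite zA ez eqxx.
exists [set lift y | y in Y]; split.
- by apply/subsetP=> _ /imsetP[y yY ->]; case: (liftP y yY).
- exact: leq_imset_card.
rewrite morphimEsub; last first.
  apply/subsetP=> _ /imsetP[y yY ->]; case: (liftP y yY) => lA _.
  exact: subsetP sAG _ lA.
rewrite -imset_comp; apply/setP=> y; apply/imsetP/idP => [[y' y'Y ->] | yY].
  by rewrite /= (liftP y' y'Y).2.
by exists y => //=; rewrite (liftP y yY).2.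
Qed.

Lemma gen_full (K : {group gT}) : K \subset G -> Cyc G \subset K -> phi @* K = P ->
  (K : {set gT}) = G.
Proof.
move=> sKG sZK eK.
have e1 := morphimGK (f := phi) (G := K); rewrite kerG in e1.
have e2 := morphimGK (f := phi) (G := G); rewrite kerG in e2.
by rewrite -[LHS](e1 sZK sKG) eK -imG; exact: e2 (Cyc_sub G) (subxx G).
Qed.

Lemma absorb_gen (X A B : {set gT}) a : a \in A -> A \subset G -> B \subset Cyc G ->
  exists2 u, u \in G & <<X :|: (u |: (A :\ a))>> = <<X :|: A :|: B>>.
Proof.
move=> aA sAG sBZ; have [u uG eu] := absorb (subsetP sAG a aA) sBZ.
exists u => //.
have uL : u \in <<X :|: (u |: (A :\ a))>> by rewrite mem_gen // !inE eqxx orbT.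
have sUL : <<a |: B>> \subset <<X :|: (u |: (A :\ a))>> by rewrite eu cycle_subG.
apply: gen_eqP.
  rewrite !subUset sub1set; apply/and3P; split.
  - by apply: sub_gen; rewrite -setUA subsetUl.
  - have : u \in <<a |: B>> by rewrite eu cycle_id.
    apply: (subsetP (genS _)); rewrite subUset sub1set !inE aA orbT /=.
    exact: subsetUr.
  - apply: sub_gen; apply: subset_trans (subsetDl _ _) _.
    by rewrite -setUA setUCA subsetUl.
rewrite !subUset -andbA; apply/and3P; split.
- by apply: sub_gen; exact: subsetUl.
- apply/subsetP=> y yA; case: (eqVneq y a) => [->|nya].
    by apply: (subsetP sUL); rewrite mem_gen // setU11.
  by rewrite mem_gen // !inE nya yA !orbT.
- apply: subset_trans sUL; apply: sub_gen; exact: subsetUr.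
Qed.

Lemma card_absorb (A : {set gT}) a u : a \in A -> #|u |: (A :\ a)| <= #|A|.
Proof.
move=> aA; rewrite cardsU1 (cardsD1 a A) aA add1n.
by case: (u \in A :\ a).
Qed.

Theorem mainG k : 1 < k < d G -> flexible G k.
Proof.
case/andP=> k2 kd x xG dx.
set Xs := [set x i | i : 'I_k].
have sXG : Xs \subset G by apply/subsetP=> _ /imsetP[i _ ->].
have sZG := Cyc_sub G.
have lb : logn p #|V| + (C :!=: 1) <= d G.
  have [X0 cX0 eX0] := d_gen G.
  have sX0 : X0 \subset G by rewrite -eX0 subset_gen.
  rewrite -cX0; apply: leq_trans (_ : #|phi @* X0| <= _).
    apply: (Q1 pr_p abV sdP nUC fpf); first by rewrite -imG morphimS.
    by rewrite -morphim_gen // eX0.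
  by rewrite morphimEsub // leq_imset_card.
set Xb := phi @* Xs.
have minT : forall T : {set rT}, T \subset P -> T != set0 -> <<T>> = <<Xb>> -> k <= #|T|.
  move=> T sTP nT0 eT.
  have sHG : <<Xs>> \subset G by rewrite gen_subG.
  have imH : phi @* <<Xs>> = <<Xb>> by rewrite morphim_gen.
  have sTH : T \subset phi @* <<Xs>> by rewrite imH -eT subset_gen.
  have [T' [sT'H cT' eT']] := lift_set sHG sTH.
  have [a aT'] : exists a, a \in T'.
    apply/set0Pn; apply: contraNneq nT0 => T'0; by rewrite -eT' T'0 morphim0.
  have sT'G := subset_trans sT'H sHG.
  have [u uG eu] := absorb_gen set0 aT' sT'G (subsetIr <<Xs>> (Cyc G)).
  rewrite !set0U in eu.
  have eH : <<T' :|: (<<Xs>> :&: Cyc G)>> = <<Xs>>.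
    apply/eqP; rewrite eqEsubset gen_subG subUset sT'H subsetIl /=.
    apply/subsetP=> y yH.
    have yG := subsetP sHG y yH.
    have : phi y \in phi @* <<T'>>.
      by rewrite morphim_gen ?eT' ?eT -?imH ?mem_morphim.
    case/morphimP=> t tG tT' ety.
    have [z zK ezy] := ker_rcoset yG tG ety.
    have sT'L : <<T'>> \subset <<T' :|: (<<Xs>> :&: Cyc G)>> by rewrite genS ?subsetUl.
    have tL := subsetP sT'L t tT'.
    rewrite ezy groupM //; rewrite kerG in zK.
    apply: mem_gen; rewrite inE; apply/orP; right; rewrite inE zK andbT.
    have -> : z = y * t^-1 by rewrite ezy mulgK.
    have tH : t \in <<Xs>> by apply: (subsetP _ t tT'); rewrite gen_subG.
    by rewrite groupM ?groupV.
  rewrite -eT' in eT.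
  have e3 : <<u |: (T' :\ a)>> = <<Xs>> by rewrite eu eH.
  have le := d_min (H := <<Xs>>%G) e3; rewrite dx in le.
  apply: leq_trans le (leq_trans (card_absorb u aT') cT').
have s0 : 0 < d G - k by rewrite subn_gt0.
have bound : logn p #|V| + (C :!=: 1) <= k + (d G - k) by rewrite subnKC // ltnW.
have sXbP : Xb \subset P by rewrite -imG morphimS.
have [Y [sYP cY eY]] := QT pr_p abV sdP cycC nUC fpf sXbP k2 s0 minT bound.
have sYG : Y \subset phi @* G by rewrite imG.
have [Y' [sY'G cY' eY']] := lift_set (subxx G) sYG.
pose A1 := if Y' == set0 then [set 1] else Y'.
have [a aA1] : exists a, a \in A1.
  rewrite /A1; case: ifP => [_ | /negbT /set0Pn [a aY]]; [by exists 1; rewrite set11 | by exists a].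
have sA1G : A1 \subset G by rewrite /A1; case: ifP; rewrite ?sub1set ?group1.
have cA1 : #|A1| <= d G - k.
  by rewrite /A1; case: ifP => _; rewrite ?cards1 // (leq_trans cY').
have [u uG eu] := absorb_gen Xs aA1 sA1G (subxx (Cyc G)).
set A' := u |: (A1 :\ a).
have cA' : #|A'| <= d G - k := leq_trans (card_absorb u aA1) cA1.
have sA'G : A' \subset G.
  by rewrite subUset sub1set uG (subset_trans (subsetDl _ _) sA1G).
have eG : <<Xs :|: A'>> = G.
  rewrite eu; apply: gen_full.
  - by rewrite gen_subG !subUset sXG sA1G sZG.
  - by apply: sub_gen; exact: subsetUr.
  apply/eqP; rewrite eqEsubset -imG morphimS ?gen_subG ?subUset ?sXG ?sA1G ?sZG //=.
  rewrite imG -eY.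
  have -> : <<Xb :|: Y>> = phi @* <<Xs :|: Y'>>.
    by rewrite morphim_gen ?subUset ?sXG // morphimU eY'.
  apply: morphimS; apply: genS; rewrite subUset -setUA subsetUl /=.
  rewrite /A1; case: ifP => [/eqP -> | _]; first by rewrite sub0set.
  by rewrite setUCA subsetUl.
have [y [sA'y sy1]] := fun_of_set cA'.
exists y; split.
  move=> j; have : y j \in 1 |: A' by apply: (subsetP sy1); apply: imset_f.
  by rewrite in_setU1 => /orP[/eqP -> | /(subsetP sA'G)].
rewrite -eG; apply: gen_eqP.
  rewrite subUset; apply/andP; split.
    by apply: sub_gen; exact: subsetUl.
  apply: subset_trans sy1 _; rewrite subUset sub1set group1 /=.
  by apply: sub_gen; exact: subsetUr.
rewrite subUset; apply/andP; split.
  by apply: sub_gen; exact: subsetUl.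
by apply: subset_trans sA'y _; apply: sub_gen; exact: subsetUr.
Qed.
End MainG.

Unset Implicit Arguments.

Lemma scalar_mxX_ (R : comPzRingType) n (a : R) i :
  ((a%:M : 'M[R]_n) ^+ i = (a ^+ i)%:M)%R.
Proof.
elim: i => [|i IH]; first by rewrite !GRing.expr0.
by rewrite !GRing.exprS IH scalar_mxM.
Qed.

Theorem corollary2p11 (gT : finGroupType) (G : {group gT})
    (p r' : nat) (g : {'GL_r'.+1['F_p]}) :
  prime p -> 3 <= d G -> is_scalar_mx (GLval g) ->
  (G / Cyc G) \isog [set: psd g] ->
  forall k, 2 <= k < d G -> flexible G k.
Proof.
move=> pr_p _ /is_scalar_mxP[lam elam] iso k hk.
set to := ('MR (cyc_GLrepr g))%gact.
set V := (sdpair1 to @* [set: 'rV['F_p]_(r'.+1)])%G.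
set C := (sdpair2 to @* <[g]>)%G.
have sdP : V ><| C = [set: psd g] := sdprod_sdpair to.
have abV : p.-abelem V by apply: morphim_abelem; exact: mx_Fp_abelem.
have cycC : cyclic C by apply: morphim_cyclic; exact: cycle_cyclic.
have rGE : forall i, GLval (g ^+ i) = ((lam ^+ i)%:M)%R.
  move=> i; rewrite -[GLval _]/(cyc_GLrepr g (g ^+ i)) repr_mxX ?cycle_id //=.
  by rewrite elam scalar_mxX_.
have actE : forall a x, a \in <[g]> -> exists mu : 'F_p,
    to x a = (mu *: x)%R /\ (mu = 1%R -> a = 1).
  move=> a x /cycleP[i ->].
  exists (lam ^+ i)%R; split.
    rewrite /to /= mx_repr_actE ?mem_cycle //.
    by rewrite -[cyc_GLrepr g _]/(GLval (g ^+ i)) rGE mul_mx_scalar.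
  by move=> e1; apply: val_inj; rewrite /= rGE e1.
have natmu : forall mu : 'F_p, mu = ((val mu)%:R)%R.
  move=> mu; apply: val_inj; rewrite /= val_Fp_nat // modn_small //.
  by apply: leq_trans (ltn_ord mu) _; rewrite Fp_cast.
have nUC : forall U : {group psd g}, U \subset V -> C \subset 'N(U).
  move=> U sUV; apply/subsetP=> c /morphimP[a aD _ ->].
  rewrite inE; apply/subsetP=> _ /imsetP[w wU ->].
  have /morphimP[x _ _ ex] := subsetP sUV w wU.
  rewrite ex -sdpair_act ?inE //.
  have [mu [-> _]] := actE a x aD.
  rewrite [mu]natmu GRing.scaler_nat -FinRing.zmodXgE morphX ?inE // groupX //.
  by rewrite -ex.
have fpf : forall c v, c \in C -> c != 1 -> v \in V -> v ^ c = v -> v = 1.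
  move=> c v /morphimP[a aD _ ->] na1 /morphimP[x _ _ ->] e.
  rewrite -sdpair_act ?inE // in e.
  have [mu [emu mu1]] := actE a x aD; rewrite emu in e.
  have ex : (mu *: x)%R = x := injmP (injm_sdpair1 to) _ _ (in_setT _) (in_setT _) e.
  have nmu1 : mu != 1%R.
    by apply: contraNneq na1 => /mu1 ->; rewrite morph1.
  have x0 : x = 0%R.
    apply/eqP; have : ((mu - 1) *: x == 0)%R by rewrite GRing.scalerBl ex GRing.scale1r GRing.subrr.
    by rewrite GRing.scaler_eq0 GRing.subr_eq0 (negbTE nmu1).
  by rewrite x0; exact: morph1.
case/isogP: iso => f injf imf.
have sGD : G \subset coset (Cyc G) @*^-1 (G / Cyc G).
  by rewrite -sub_morphim_pre ?Cyc_norm.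
set phi := restrm sGD (f \o coset (Cyc G)).
have imphi : phi @* G = [set: psd g].
  by rewrite morphim_restrm setIid morphim_comp imf.
have kerphi : 'ker phi = Cyc G.
  rewrite ker_restrm ker_comp ker_injm // -kerE ker_coset.
  by apply/setIidPr; exact: Cyc_sub.
exact: (mainG pr_p abV sdP cycC nUC fpf imphi kerphi hk).
Qed.
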